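(* Let $x>0$, $y>0$, and let $p=p_n=\lfloor x n^{1/2}\rfloor$ and $q=q_n=\lfloor y n^{1/2}\rfloor$. Set $$K_n=\left(\frac{2}{n}\right)^{pq/2}\prod_{j=1}^{q}\frac{\Gamma((n-j+1)/2)}{\Gamma((n-p-j+1)/2)}.$$ Then, as $n\to\infty$, $$K_n=\exp\left\{-\left(\frac{p^2q+pq^2}{4n}+\frac{xy}{4}+\frac{2x^3y+2xy^3+3x^2y^2}{24}\right)+o(1)\right\}.$$
   Context: $\Gamma$ denotes the Gamma function and $\lfloor a\rfloor$ the integer part of $a$. *)

(* Defs.v *)
From Stdlib Require Import Reals.
From Coquelicot Require Import Coquelicot.
Open Scope R_scope.

(* Euler Gamma function, Gamma(s) = int_0^oo t^(s-1) e^(-t) dt (meaningful for s > 0). *)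
Definition Gamma (s : R) : R :=
  RInt_gen (fun t => Rpower t (s - 1) * exp (- t))
           (at_right 0) (Rbar_locally p_infty).

Fixpoint prodR (f : nat -> R) (q : nat) : R :=
  match q with
  | O => 1
  | S k => prodR f k * f (S k)
  end.

Definition nfloor (r : R) : nat := Z.to_nat (Int_part r).

Definition p_n (x : R) (n : nat) : nat := nfloor (x * sqrt (INR n)).

Definition K_n (x y : R) (n : nat) : R :=
  let p := p_n x n in
  let q := p_n y n in
  Rpower (2 / INR n) (INR (p * q) / 2) *
  prodR (fun j => Gamma ((INR n - INR j + 1) / 2) /
                  Gamma ((INR n - INR p - INR j + 1) / 2)) q.

(* Main.v *)
Require Import Defs.
From Stdlib Require Import Reals.
From Coquelicot Require Import Coquelicot.
From Stdlib Require Import Lra Lia Psatz ZArith.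
Open Scope R_scope.

Definition gf (s t : R) := Rpower t (s - 1) * exp (- t).

Lemma is_derive_Rpower y x : 0 < x ->
  is_derive (fun t => Rpower t y) x (y * Rpower x (y - 1)).
Proof. intros; apply is_derive_Reals, derivable_pt_lim_power; auto. Qed.

Lemma Rpower_cont y x : 0 < x -> continuous (fun t => Rpower t y) x.
Proof. intros H; apply (@ex_derive_continuous R_AbsRing R_NormedModule); eexists; apply is_derive_Rpower; auto. Qed.

Lemma expm_cont x : continuous (fun t => exp (- t)) x.
Proof. apply (@ex_derive_continuous R_AbsRing R_NormedModule); auto_derive; auto. Qed.

Lemma gf_cont s t : 0 < t -> continuous (gf s) t.
Proof.
  intros Ht; unfold gf.
  apply (continuous_mult (fun t => Rpower t (s-1)) (fun t => exp (-t))).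
  apply Rpower_cont; auto. apply expm_cont.
Qed.

Lemma Rpower_pos' t y : 0 < Rpower t y.
Proof. unfold Rpower; apply exp_pos. Qed.

Lemma gf_pos s t : 0 < gf s t.
Proof. unfold gf; apply Rmult_lt_0_compat; [apply Rpower_pos'|apply exp_pos]. Qed.

Lemma ex_RInt_gf s a b : 0 < a -> 0 < b -> ex_RInt (gf s) a b.
Proof.
  intros Ha Hb; apply (@ex_RInt_continuous R_CompleteNormedModule); intros z Hz.
  apply gf_cont. destruct Hz as [Hz _]. eapply Rlt_le_trans; [|apply Hz].
  apply Rmin_case; auto.
Qed.

Lemma Rpower_lt_base a b s : 0 < a -> a < b -> 0 < s -> Rpower a s < Rpower b s.
Proof.
  intros Ha Hab Hs; unfold Rpower; apply exp_increasing.
  apply Rmult_lt_compat_l; auto. apply ln_increasing; auto.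
Qed.

Lemma Rpower_le_base a b s : 0 < a -> a <= b -> 0 <= s -> Rpower a s <= Rpower b s.
Proof.
  intros Ha Hab Hs; unfold Rpower. destruct Hab as [H|H]; [|subst; lra].
  destruct Hs as [Hs|Hs]; [|subst; rewrite !Rmult_0_l; lra].
  apply Rlt_le, exp_increasing.
  apply Rmult_lt_compat_l; auto. apply ln_increasing; auto.
Qed.


Lemma Rpower_m1 x y : 0 < x -> Rpower x (y - 1) = Rpower x y / x.
Proof.
  intros Hx. unfold Rminus. rewrite Rpower_plus, Rpower_Ropp, Rpower_1; auto.
Qed.

Lemma is_derive_Rpower_div s x : 0 < x -> 0 < s ->
  is_derive (fun t => Rpower t s / s) x (Rpower x (s - 1)).
Proof.
  intros Hx Hs. rewrite Rpower_m1; auto. unfold Rpower.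
  auto_derive; auto. field. split; lra.
Qed.

Lemma RInt_Rpower a b s : 0 < a -> 0 < s ->  0 < b ->
  is_RInt (fun t => Rpower t (s - 1)) a b (Rpower b s / s - Rpower a s / s).
Proof.
  intros Ha Hs Hb.
  apply (is_RInt_derive (fun t => Rpower t s / s)).
  - intros x Hx. assert (0 < x).
    { eapply Rlt_le_trans; [|apply Hx]. apply Rmin_case; auto. }
    apply is_derive_Rpower_div; auto.
  - intros x Hx. apply Rpower_cont.
    eapply Rlt_le_trans; [|apply Hx]. apply Rmin_case; auto.
Qed.

Lemma near0_bound a b s : 0 < a -> a <= b -> 0 < s ->
  0 <= RInt (gf s) a b <= Rpower b s / s.
Proof.
  intros Ha Hab Hs. split.
  - apply RInt_ge_0; auto. apply ex_RInt_gf; lra.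
    intros; apply Rlt_le, gf_pos.
  - apply Rle_trans with (RInt (fun t => Rpower t (s - 1)) a b).
    + apply RInt_le; auto. apply ex_RInt_gf; lra.
      eexists; apply RInt_Rpower; lra.
      intros t Ht. unfold gf. rewrite <- (Rmult_1_r (Rpower t (s-1))) at 2.
      apply Rmult_le_compat_l. apply Rlt_le, Rpower_pos'.
      rewrite <- exp_0. apply Rlt_le, exp_increasing. lra.
    + rewrite (is_RInt_unique _ _ _ _ (RInt_Rpower a b s Ha Hs ltac:(lra))).
      assert (0 < Rpower a s / s). apply Rdiv_lt_0_compat; auto; apply Rpower_pos'.
      lra.
Qed.

Lemma near0_abs a b d s : 0 < a -> 0 < b -> a <= d -> b <= d -> 0 < s ->
  Rabs (RInt (gf s) a b) <= Rpower d s / s.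
Proof.
  intros Ha Hb Had Hbd Hs.
  assert (Hd : Rpower b s / s <= Rpower d s / s /\ Rpower a s / s <= Rpower d s / s).
  { split; apply Rmult_le_compat_r; try (apply Rlt_le, Rinv_0_lt_compat; auto);
    apply Rpower_le_base; lra. }
  destruct (Rle_lt_dec a b) as [H|H].
  - destruct (near0_bound a b s Ha H Hs). rewrite Rabs_pos_eq; lra.
  - destruct (near0_bound b a s Hb (Rlt_le _ _ H) Hs).
    rewrite <- (opp_RInt_swap (gf s)) by (apply ex_RInt_gf; lra).
    change (opp (RInt (gf s) b a)) with (- RInt (gf s) b a).
    rewrite Rabs_Ropp, Rabs_pos_eq; lra.
Qed.

Lemma exp_le_mono a b : a <= b -> exp a <= exp b.
Proof. intros [H|H]; [apply Rlt_le, exp_increasing; auto| subst; lra]. Qed.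

Definition Cst (s : R) := exp ((Rabs s + 1) * ln (2 * (Rabs s + 1)) - (Rabs s + 1)).

Lemma ln_le_m1 u : 0 < u -> ln u <= u - 1.
Proof.
  intros Hu. pose proof (exp_ineq1_le (ln u)). rewrite exp_ln in H; auto. lra.
Qed.

Lemma gf_inf_bound s t : 1 <= t -> gf s t <= Cst s * exp (- t / 2).
Proof.
  intros Ht. unfold gf, Cst, Rpower. rewrite <- !exp_plus.
  set (K := Rabs s + 1).
  assert (HK : 1 <= K) by (unfold K; pose proof (Rabs_pos s); lra).
  assert (Hl : 0 <= ln t) by (rewrite <- ln_1; apply ln_le; lra).
  assert (H1 : (s - 1) * ln t <= K * ln t).
  { apply Rmult_le_compat_r; auto. unfold K. pose proof (Rle_abs s). lra. }
  assert (H2 : ln t <= ln (2 * K) + t / (2 * K) - 1).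
  { pose proof (ln_le_m1 (t / (2 * K))). rewrite ln_div in H by lra.
    assert (0 < t / (2*K)) by (apply Rdiv_lt_0_compat; lra). specialize (H H0). lra. }
  assert (H3 : K * ln t <= K * ln (2 * K) + t / 2 - K).
  { apply Rmult_le_compat_l with (r := K) in H2; [|lra].
    replace (K * (ln (2 * K) + t / (2 * K) - 1)) with (K * ln (2 * K) + t / 2 - K) in H2
      by (field; lra). lra. }
  apply exp_le_mono; lra.
Qed.

Lemma Cst_pos s : 0 < Cst s.
Proof. apply exp_pos. Qed.

Lemma RInt_expm2 a b c : is_RInt (fun t => c * exp (- t / 2)) a b
   (- 2 * c * exp (- b / 2) - (- 2 * c * exp (- a / 2))).
Proof.
  apply (is_RInt_derive (fun t => - 2 * c * exp (- t / 2))).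
  - intros x _. auto_derive; auto. unfold Rdiv. set (E := exp _). field.
  - intros x _. apply (@ex_derive_continuous R_AbsRing R_NormedModule); auto_derive; auto.
Qed.

Lemma inf_bound b b' s : 1 <= b -> b <= b' ->
  0 <= RInt (gf s) b b' <= 2 * Cst s * exp (- b / 2).
Proof.
  intros Hb Hbb. split.
  - apply RInt_ge_0; auto. apply ex_RInt_gf; lra.
    intros; apply Rlt_le, gf_pos.
  - apply Rle_trans with (RInt (fun t => Cst s * exp (- t / 2)) b b').
    + apply RInt_le; auto. apply ex_RInt_gf; lra.
      eexists; apply RInt_expm2.
      intros t Ht. apply gf_inf_bound. lra.
    + rewrite (is_RInt_unique _ _ _ _ (RInt_expm2 b b' (Cst s))).
      assert (0 < Cst s * exp (- b' / 2)) by (apply Rmult_lt_0_compat; [apply Cst_pos|apply exp_pos]).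
      lra.
Qed.

Lemma inf_abs b b' M s : 1 <= M -> M <= b -> M <= b' ->
  Rabs (RInt (gf s) b b') <= 2 * Cst s * exp (- M / 2).
Proof.
  intros HM Hb Hb'.
  assert (forall c, M <= c -> 2 * Cst s * exp (- c / 2) <= 2 * Cst s * exp (- M / 2)).
  { intros c Hc. apply Rmult_le_compat_l. pose proof (Cst_pos s); lra.
    apply exp_le_mono; lra. }
  destruct (Rle_lt_dec b b') as [H1|H1].
  - destruct (inf_bound b b' s) as [? ?]; try lra. specialize (H b). rewrite Rabs_pos_eq; lra.
  - destruct (inf_bound b' b s) as [? ?]; try lra. specialize (H b').
    rewrite <- (opp_RInt_swap (gf s)) by (apply ex_RInt_gf; lra).
    change (opp (RInt (gf s) b' b)) with (- RInt (gf s) b' b).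
    rewrite Rabs_Ropp, Rabs_pos_eq; lra.
Qed.

Lemma small_delta s e : 0 < s -> 0 < e -> exists d, 0 < d /\ Rpower d s < e.
Proof.
  intros Hs He. exists (Rpower (e/2) (/ s)). split. apply Rpower_pos'.
  rewrite Rpower_mult. rewrite Rinv_l by lra. rewrite Rpower_1; lra.
Qed.

Lemma big_M c e : 0 < e -> exists M, 1 <= M /\ c * exp (- M / 2) < e.
Proof.
  intros He. destruct (Rle_lt_dec c 0) as [Hc|Hc].
  - exists 1. split; [lra|]. set (E := exp _). assert (0 < E) by apply exp_pos. nra.
  - exists (Rmax 1 (- 2 * ln (e / (2 * c)))). split. apply Rmax_l.
    assert (exp (- Rmax 1 (- 2 * ln (e / (2 * c))) / 2) <= e / (2 * c)).
    { rewrite <- (exp_ln (e / (2 * c))) at 2 by (apply Rdiv_lt_0_compat; lra).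
      apply exp_le_mono. pose proof (Rmax_r 1 (- 2 * ln (e / (2 * c)))). lra. }
    apply Rmult_le_compat_l with (r := c) in H; [|lra].
    replace (c * (e / (2 * c))) with (e/2) in H by (field; lra). lra.
Qed.

Lemma Rball_abs (u v e : R) : Rabs (v - u) < e -> ball u e v.
Proof. intros H. apply H. Qed.

Lemma gamma_ex s : 0 < s -> exists l, is_RInt_gen (gf s) (at_right 0) (Rbar_locally p_infty) l.
Proof.
  intros Hs.
  assert (HF : filter_prod (at_right 0) (Rbar_locally p_infty)
   (fun x : R * R =>
    (exists y : R_CompleteSpace, is_RInt (gf s) (fst x) (snd x) y) /\
    (forall y1 y2 : R_CompleteSpace,
      is_RInt (gf s) (fst x) (snd x) y1 -> is_RInt (gf s) (fst x) (snd x) y2 -> y1 = y2))).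
  { apply (Filter_prod _ _ _ (fun a => 0 < a) (fun b => 0 < b)).
    + exists (mkposreal 1 Rlt_0_1). intros; auto.
    + exists 0. auto.
    + intros a b Ha Hb. split.
      * exists (RInt (gf s) a b). apply (@RInt_correct R_CompleteNormedModule), ex_RInt_gf; auto.
      * intros y1 y2 H1 H2. simpl in *. rewrite <- (is_RInt_unique _ _ _ _ H1).
        apply is_RInt_unique; auto. }
  unfold is_RInt_gen.
  apply (proj1 (filterlimi_locally_cauchy (U := R_CompleteSpace) (F := filter_prod (at_right 0) (Rbar_locally p_infty))
     (fun ab y => is_RInt (gf s) (fst ab) (snd ab) y) HF)).
  intros eps. assert (He : 0 < eps) by (destruct eps; auto).
    destruct (small_delta s (s * eps / 2) Hs) as [d [Hd Hds]]. { nra. }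
    destruct (big_M (2 * Cst s) (eps / 2)) as [M [HM HMe]]. { lra. }
    exists (fun ab => 0 < fst ab < d /\ M < snd ab). split.
    + apply (Filter_prod _ _ _ (fun a => 0 < a < d) (fun b => M < b)).
      * exists (mkposreal d Hd). intros t Ht Ht0. split; auto.
        apply Rabs_lt_between' in Ht. simpl in Ht. lra.
      * exists M. auto.
      * intros; simpl; auto.
    + intros [a b] [a' b'] [Ha Hb] [Ha' Hb'] u v Hu Hv. simpl in *.
      apply (@is_RInt_unique R_CompleteNormedModule) in Hu. apply (@is_RInt_unique R_CompleteNormedModule) in Hv. subst u v.
      apply Rball_abs.
      assert (E : RInt (gf s) a' b' - RInt (gf s) a b = RInt (gf s) a' a + RInt (gf s) b b').
      { rewrite <- (RInt_Chasles (gf s) a' a b') by (apply ex_RInt_gf; lra).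
        rewrite <- (RInt_Chasles (gf s) a b b') by (apply ex_RInt_gf; lra).
        change plus with Rplus. ring. }
      rewrite E.
      pose proof (near0_abs a' a d s ltac:(lra) ltac:(lra) ltac:(lra) ltac:(lra) Hs).
      pose proof (inf_abs b b' M s HM ltac:(lra) ltac:(lra)).
      assert (Rpower d s / s < eps / 2).
      { apply Rmult_lt_reg_r with s; auto. unfold Rdiv. rewrite Rmult_assoc, Rinv_l by lra. lra. }
      eapply Rle_lt_trans; [apply Rabs_triang|]. lra.
Qed.

Lemma Gamma_spec s : 0 < s -> is_RInt_gen (gf s) (at_right 0) (Rbar_locally p_infty) (Gamma s).
Proof.
  intros Hs. destruct (gamma_ex s Hs) as [l Hl].
  replace (Gamma s) with l; auto.
  symmetry. unfold Gamma. apply (is_RInt_gen_unique (gf s) l Hl).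
Qed.

Lemma Gamma_pos s : 0 < s -> 0 < Gamma s.
Proof.
  intros Hs. pose proof (Gamma_spec s Hs) as H.
  set (c := RInt (gf s) 1 2).
  assert (Hc : 0 < c).
  { apply RInt_gt_0. lra. intros; apply gf_pos. intros; apply gf_cont; lra. }
  assert (HP : filter_prod (at_right 0) (Rbar_locally p_infty)
      (fun ab => 0 < fst ab < 1 /\ 2 < snd ab)).
  { apply (Filter_prod _ _ _ (fun a => 0 < a < 1) (fun b => 2 < b)).
    + exists (mkposreal 1 Rlt_0_1). intros t Ht Ht0. split; auto.
      apply Rabs_lt_between' in Ht. simpl in Ht. lra.
    + exists 2. auto.
    + intros; simpl; auto. }
  unfold is_RInt_gen in H.
  pose proof (proj1 (filterlimi_locally (F := filter_prod (at_right 0) (Rbar_locally p_infty))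
     (fun ab => is_RInt (gf s) (fst ab) (snd ab)) (Gamma s)) H) as H'. clear H. rename H' into H.
  specialize (H (mkposreal (c/2) ltac:(lra))).
  destruct (filter_ex _ (filter_and _ _ HP H)) as [[a b] [[Ha Hb] [z [Hz Hb2]]]].
  simpl in *. apply (@is_RInt_unique R_CompleteNormedModule) in Hz. subst z.
  assert (RInt (gf s) a b >= c).
  { rewrite <- (RInt_Chasles (gf s) a 1 b) by (apply ex_RInt_gf; lra).
    rewrite <- (RInt_Chasles (gf s) 1 2 b) by (apply ex_RInt_gf; lra).
    change plus with Rplus.
    destruct (near0_bound a 1 s) as [? _]; try lra.
    destruct (inf_bound 2 b s) as [? _]; try lra.
    unfold c; lra. }
  change (Rabs (RInt (gf s) a b - Gamma s) < c / 2) in Hb2.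
  apply Rabs_lt_between' in Hb2. lra.
Qed.

Definition hh (s t : R) := - (Rpower t s * exp (- t)).

Lemma hh_derive s t : 0 < t -> is_derive (hh s) t (gf (s + 1) t - s * gf s t).
Proof.
  intros Ht. unfold gf. replace (s + 1 - 1) with s by ring. rewrite Rpower_m1 by auto.
  unfold hh, Rpower. auto_derive; auto. field. lra.
Qed.

Lemma g1_cont s x : 0 < x -> continuous (fun t => gf (s + 1) t - s * gf s t) x.
Proof.
  intros Hx. apply (@ex_derive_continuous R_AbsRing R_NormedModule).
  unfold gf, Rpower. auto_derive; auto.
Qed.

Lemma at_right_pos (P : R -> Prop) d : 0 < d -> (forall t, 0 < t < d -> P t) -> at_right 0 P.
Proof.
  intros Hd H. exists (mkposreal d Hd). intros t Ht Ht0. apply H. split; auto.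
  apply Rabs_lt_between' in Ht. simpl in Ht. lra.
Qed.

Lemma Gamma_rec s : 0 < s -> Gamma (s + 1) = s * Gamma s.
Proof.
  intros Hs.
  assert (HP : filter_prod (at_right 0) (Rbar_locally p_infty) (fun ab => 0 < fst ab /\ 0 < snd ab)).
  { apply (Filter_prod _ _ _ (fun a => 0 < a) (fun b => 0 < b)).
    + apply (at_right_pos _ 1); [lra|]. intros; lra.
    + exists 0. auto.
    + intros; simpl; auto. }
  assert (HD : is_RInt_gen (Derive (hh s)) (at_right 0) (Rbar_locally p_infty) (0 - 0)).
  { apply is_RInt_gen_Derive.
    - eapply filter_imp; [|apply HP]. intros [a b] [Ha Hb] x Hx. simpl in *.
      eexists. apply hh_derive. destruct Hx as [Hx _]. eapply Rlt_le_trans; [|apply Hx].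
      apply Rmin_case; auto.
    - eapply filter_imp; [|apply HP]. intros [a b] [Ha Hb] x Hx. simpl in *.
      assert (Hx0 : 0 < x). { destruct Hx as [Hx _]. eapply Rlt_le_trans; [|apply Hx].
      apply Rmin_case; auto. }
      apply (continuous_ext_loc _ (fun t => gf (s + 1) t - s * gf s t)).
      + exists (mkposreal (x/2) ltac:(lra)). intros y Hy.
        apply Rabs_lt_between' in Hy. simpl in Hy.
        symmetry. apply is_derive_unique, hh_derive. lra.
      + apply g1_cont; auto.
    - apply filterlim_locally. intros eps.
      destruct (small_delta s eps Hs (cond_pos eps)) as [d [Hd Hde]].
      apply (at_right_pos _ d Hd). intros t Ht. apply Rball_abs.
      unfold hh. rewrite Rminus_0_r, Rabs_Ropp, Rabs_pos_eq.
      2: { apply Rlt_le, Rmult_lt_0_compat; [apply Rpower_pos'|apply exp_pos]. }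
      apply Rle_lt_trans with (Rpower t s).
      { rewrite <- (Rmult_1_r (Rpower t s)) at 2. apply Rmult_le_compat_l.
        apply Rlt_le, Rpower_pos'. rewrite <- exp_0. apply exp_le_mono. lra. }
      apply Rlt_trans with (Rpower d s); auto. apply Rpower_lt_base; lra.
    - apply filterlim_locally. intros eps.
      destruct (big_M (Cst (s + 1)) eps (cond_pos eps)) as [M [HM HMe]].
      exists M. intros t Ht. apply Rball_abs.
      unfold hh. rewrite Rminus_0_r, Rabs_Ropp, Rabs_pos_eq.
      2: { apply Rlt_le, Rmult_lt_0_compat; [apply Rpower_pos'|apply exp_pos]. }
      pose proof (gf_inf_bound (s + 1) t ltac:(lra)). unfold gf in H.
      replace (s + 1 - 1) with s in H by ring.
      eapply Rle_lt_trans; [apply H|]. eapply Rle_lt_trans; [|apply HMe].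
      apply Rmult_le_compat_l. apply Rlt_le, Cst_pos. apply exp_le_mono. lra. }
  apply is_RInt_gen_ext with (g := fun t => gf (s + 1) t - s * gf s t) in HD.
  2: { eapply filter_imp; [|apply HP]. intros [a b] [Ha Hb] x Hx. simpl in *.
      assert (Hx0 : 0 < x). { destruct Hx as [Hx _]. eapply Rle_lt_trans; [|apply Hx].
      apply Rmin_case; lra. }
      apply is_derive_unique, hh_derive; auto. }
  pose proof (is_RInt_gen_scal _ s _ (Gamma_spec s Hs)) as HS.
  pose proof (is_RInt_gen_plus _ _ _ _ HD HS) as HT.
  apply is_RInt_gen_ext with (g := gf (s + 1)) in HT.
  2: { apply filter_forall. intros [a b] x _. simpl. unfold plus, scal; simpl; unfold mult; simpl. ring. }
  pose proof (is_RInt_gen_unique _ _ HT). unfold Gamma at 1. change (fun t => Rpower t (s + 1 - 1) * exp (- t)) with (gf (s + 1)).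
  rewrite H. simpl. unfold plus, scal; simpl; unfold mult; simpl. ring.
Qed.

Lemma RInt_gen_nonneg g l : is_RInt_gen g (at_right 0) (Rbar_locally p_infty) l ->
  (forall t, 0 < t -> 0 <= g t) -> 0 <= l.
Proof.
  intros H Hg.
  pose proof (is_RInt_gen_scal _ 0 _ H) as Z.
  apply is_RInt_gen_ext with (g := fun _ => 0) in Z.
  2: { apply filter_forall. intros [a b] x _. simpl. unfold scal; simpl; unfold mult; simpl. ring. }
  replace (scal 0 l) with 0 in Z by (unfold scal; simpl; unfold mult; simpl; ring).
  assert (HP : filter_prod (at_right 0) (Rbar_locally p_infty) (fun ab => 0 < fst ab < 1 /\ 1 < snd ab)).
  { apply (Filter_prod _ _ _ (fun a => 0 < a < 1) (fun b => 1 < b)).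
    + apply (at_right_pos _ 1); [lra|]. intros; lra.
    + exists 1. auto.
    + intros; simpl; auto. }
  pose proof (RInt_gen_norm (Fa := at_right 0) (Fb := Rbar_locally p_infty) (fun _ => 0) g 0 l) as N.
  assert (N' : norm (0:R) <= l).
  { apply N; auto.
    - eapply filter_imp; [|apply HP]. intros [a b] Hab; simpl in *; lra.
    - eapply filter_imp; [|apply HP]. intros [a b] Hab x Hx; simpl in *.
      change (Rabs 0 <= g x). rewrite Rabs_R0. apply Hg. lra. }
  change (Rabs 0 <= l) in N'. rewrite Rabs_R0 in N'. auto.
Qed.

Lemma Rpower_half_sq t e : Rpower t (e / 2) * Rpower t (e / 2) = Rpower t e.
Proof. rewrite <- Rpower_plus. f_equal. field. Qed.

Lemma Gamma_CS s : 1 / 2 < s -> Gamma s ^ 2 <= Gamma (s - 1 / 2) * Gamma (s + 1 / 2).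
Proof.
  intros Hs.
  set (A := Gamma (s - 1 / 2)). set (B := Gamma s). set (C := Gamma (s + 1 / 2)).
  assert (HA : 0 < A) by (apply Gamma_pos; lra).
  set (lam := - B / A).
  assert (Hs1 : 0 < s - 1/2) by lra. assert (Hs2 : 0 < s) by lra. assert (Hs3 : 0 < s + 1/2) by lra.
  pose proof (is_RInt_gen_scal _ (lam * lam) _ (Gamma_spec (s - 1/2) Hs1)) as H1.
  pose proof (is_RInt_gen_scal _ (2 * lam) _ (Gamma_spec s Hs2)) as H2.
  pose proof (is_RInt_gen_plus _ _ _ _ (is_RInt_gen_plus _ _ _ _ H1 H2) (Gamma_spec (s + 1/2) Hs3)) as H3.
  apply RInt_gen_nonneg in H3.
  - revert H3. fold A B C. unfold plus, scal; simpl; unfold mult; simpl. intros H3.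
    unfold lam in H3.
    replace (- B / A * (- B / A) * A + 2 * (- B / A) * B + C) with (C - B * B / A) in H3 by (field; lra).
    assert (B * B / A <= C) by lra.
    apply Rmult_le_compat_r with (r := A) in H; [|lra].
    replace (B * B / A * A) with (B * B) in H by (field; lra). simpl. lra.
  - intros t Ht. unfold plus, scal; simpl; unfold mult; simpl. unfold gf.
    set (u := Rpower t ((s - 3/2) / 2)). set (v := Rpower t ((s - 1/2) / 2)).
    replace (s - 1/2 - 1) with (s - 3/2) by field. replace (s + 1/2 - 1) with (s - 1/2) by field.
    rewrite <- (Rpower_half_sq t (s - 3/2)), <- (Rpower_half_sq t (s - 1/2)).
    replace (Rpower t (s - 1)) with (u * v).
    2: { unfold u, v. rewrite <- Rpower_plus. f_equal. field. }
    fold u v. pose proof (exp_pos (- t)).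
    replace (lam * lam * (u * u * exp (- t)) + 2 * lam * (u * v * exp (- t)) + v * v * exp (- t))
      with (exp (- t) * ((lam * u + v) * (lam * u + v))) by ring.
    apply Rmult_le_pos; [lra|]. apply Rle_0_sqr.
Qed.

Fixpoint sumR (f : nat -> R) (k : nat) : R :=
  match k with O => 0 | S k => sumR f k + f (S k) end.

Lemma sumR_le f g k : (forall i, (1 <= i <= k)%nat -> f i <= g i) -> sumR f k <= sumR g k.
Proof.
  induction k; simpl; intros H. lra.
  apply Rplus_le_compat. apply IHk; intros; apply H; lia. apply H; lia.
Qed.

Lemma sumR_ext f g k : (forall i, (1 <= i <= k)%nat -> f i = g i) -> sumR f k = sumR g k.
Proof.
  induction k; simpl; intros H. lra.
  rewrite IHk, H; auto; try lia. intros; apply H; lia.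
Qed.

Lemma sumR_plus f g k : sumR (fun i => f i + g i) k = sumR f k + sumR g k.
Proof. induction k; simpl; [lra|]. rewrite IHk; ring. Qed.

Lemma sumR_const c k : sumR (fun _ => c) k = INR k * c.
Proof. induction k; simpl sumR. simpl; ring. rewrite IHk, S_INR; ring. Qed.

Lemma prodR_pos f k : (forall i, (1 <= i <= k)%nat -> 0 < f i) -> 0 < prodR f k.
Proof.
  induction k; simpl; intros H. lra.
  apply Rmult_lt_0_compat. apply IHk; intros; apply H; lia. apply H; lia.
Qed.

Lemma ln_prodR f k : (forall i, (1 <= i <= k)%nat -> 0 < f i) ->
  ln (prodR f k) = sumR (fun i => ln (f i)) k.
Proof.
  induction k; simpl; intros H. apply ln_1.
  rewrite ln_mult. rewrite IHk; auto. intros; apply H; lia.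
  apply prodR_pos; intros; apply H; lia. apply H; lia.
Qed.

Lemma ln1m_upper t : 0 <= t < 1 -> ln (1 - t) <= - t - t ^ 2 / 2.
Proof.
  intros Ht. destruct (Req_dec t 0) as [H0|H0].
  { subst. replace (1 - 0) with 1 by ring. rewrite ln_1. lra. }
  destruct (MVT_gen (fun s => ln (1 - s) + s + s ^ 2 / 2) 0 t (fun s => - s ^ 2 / (1 - s)))
    as [c [Hc E]].
  - intros z Hz. rewrite Rmin_left in Hz by lra. rewrite Rmax_right in Hz by lra.
    auto_derive. lra. field. lra.
  - intros z Hz. rewrite Rmin_left in Hz by lra. rewrite Rmax_right in Hz by lra.
    apply (proj2 (continuity_pt_filterlim _ _)).
    apply (@ex_derive_continuous R_AbsRing R_NormedModule (fun s => ln (1 - s) + s + s ^ 2 / 2)).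
    auto_derive. lra.
  - rewrite Rmin_left in Hc by lra. rewrite Rmax_right in Hc by lra.
    replace (1 - 0) with 1 in E by ring. rewrite ln_1 in E.
    assert (- c ^ 2 / (1 - c) * (t - 0) <= 0).
    { assert (0 < / (1 - c)) by (apply Rinv_0_lt_compat; lra). unfold Rdiv.
      assert (0 <= c ^ 2) by (apply pow2_ge_0). assert (0 <= c ^ 2 * / (1 - c)) by (apply Rmult_le_pos; lra). nra. }
    lra.
Qed.

Lemma ln1m_lower t : 0 <= t <= 1/2 -> - t - t ^ 2 / 2 - t ^ 3 <= ln (1 - t).
Proof.
  intros Ht. destruct (Req_dec t 0) as [H0|H0].
  { subst. replace (1 - 0) with 1 by ring. rewrite ln_1. lra. }
  destruct (MVT_gen (fun s => ln (1 - s) + s + s ^ 2 / 2 + s ^ 3) 0 t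
     (fun s => s ^ 2 * (2 - 3 * s) / (1 - s))) as [c [Hc E]].
  - intros z Hz. rewrite Rmin_left in Hz by lra. rewrite Rmax_right in Hz by lra.
    auto_derive. lra. field. lra.
  - intros z Hz. rewrite Rmin_left in Hz by lra. rewrite Rmax_right in Hz by lra.
    apply (proj2 (continuity_pt_filterlim _ _)).
    apply (@ex_derive_continuous R_AbsRing R_NormedModule (fun s => ln (1 - s) + s + s ^ 2 / 2 + s ^ 3)).
    auto_derive. lra.
  - rewrite Rmin_left in Hc by lra. rewrite Rmax_right in Hc by lra.
    replace (1 - 0) with 1 in E by ring. rewrite ln_1 in E.
    assert (0 <= c ^ 2 * (2 - 3 * c) / (1 - c) * (t - 0)).
    { apply Rmult_le_pos; [|lra]. unfold Rdiv.
      apply Rmult_le_pos. apply Rmult_le_pos; nra. apply Rlt_le, Rinv_0_lt_compat; lra. }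
    lra.
Qed.

Lemma Gamma_prod a m : 0 < a - INR m -> Gamma a = Gamma (a - INR m) * prodR (fun i => a - INR i) m.
Proof.
  induction m; intros H.
  - simpl. replace (a - 0) with a by ring. ring.
  - change (prodR (fun i => a - INR i) (S m)) with (prodR (fun i => a - INR i) m * (a - INR (S m))).
    rewrite S_INR in *. rewrite IHm by lra.
    replace (a - INR m) with ((a - (INR m + 1)) + 1) at 1 by ring.
    rewrite Gamma_rec by lra. ring.
Qed.

Lemma Gamma_half a : 1 < a ->
  (a - 1) * Gamma (a - 1/2) ^ 2 <= Gamma a ^ 2 <= (a - 1/2) * Gamma (a - 1/2) ^ 2.
Proof.
  intros Ha. split.
  - pose proof (Gamma_CS (a - 1/2) ltac:(lra)) as H.
    replace (a - 1/2 - 1/2) with (a - 1) in H by lra.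
    replace (a - 1/2 + 1/2) with a in H by lra.
    pose proof (Gamma_rec (a - 1) ltac:(lra)) as R. replace (a - 1 + 1) with a in R by ring.
    assert (0 < Gamma (a - 1)) by (apply Gamma_pos; lra).
    assert ((a - 1) * Gamma (a - 1/2) ^ 2 <= (a - 1) * (Gamma (a - 1) * Gamma a)).
    { apply Rmult_le_compat_l; lra. }
    assert ((a - 1) * (Gamma (a - 1) * Gamma a) = Gamma a ^ 2) by (rewrite R; ring). lra.
  - pose proof (Gamma_CS a ltac:(lra)) as H.
    pose proof (Gamma_rec (a - 1/2) ltac:(lra)) as R. replace (a - 1/2 + 1) with (a + 1/2) in R by lra.
    rewrite R in H. nra.
Qed.

Definition Wsum (c : R) (m : nat) (nr : R) :=
  sumR (fun i => ln (1 - (c + 2 * INR i) / nr)) m.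

Definition Up (c m nr : R) :=
  - (m * c + m * (m + 1)) / nr
  - (m * c ^ 2 + 2 * c * m * (m + 1) + 2 * m * (m + 1) * (2 * m + 1) / 3) / (2 * nr ^ 2).

Lemma W_gamma c m nr : 0 < nr -> 0 < (nr - c) / 2 - INR m ->
  INR m * ln (2 / nr) + ln (Gamma ((nr - c) / 2) / Gamma ((nr - c) / 2 - INR m)) = Wsum c m nr.
Proof.
  intros Hn Hm. set (a := (nr - c) / 2) in *.
  assert (Hpos : forall i, (1 <= i <= m)%nat -> 0 < a - INR i).
  { intros i Hi. assert (INR i <= INR m) by (apply le_INR; lia). lra. }
  assert (HG : 0 < Gamma (a - INR m)) by (apply Gamma_pos; auto).
  rewrite (Gamma_prod a m Hm).
  replace (Gamma (a - INR m) * prodR (fun i => a - INR i) m / Gamma (a - INR m))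
    with (prodR (fun i => a - INR i) m) by (field; lra).
  rewrite ln_prodR by auto.
  rewrite <- sumR_const, <- sumR_plus. unfold Wsum. apply sumR_ext.
  intros i Hi. specialize (Hpos i Hi). rewrite <- ln_mult.
  - f_equal. unfold a. field. lra.
  - apply Rdiv_lt_0_compat; lra.
  - auto.
Qed.

Lemma sum_tq c nr m : nr <> 0 ->
  sumR (fun i => - ((c + 2 * INR i) / nr) - ((c + 2 * INR i) / nr) ^ 2 / 2) m = Up c (INR m) nr.
Proof.
  intros Hn. induction m.
  - simpl. unfold Up. field. auto.
  - cbn [sumR]. rewrite IHm. rewrite S_INR. unfold Up. field. auto.
Qed.

Lemma W_bounds c m nr tau : 0 <= c -> 0 < nr -> (c + 2 * INR m) / nr <= tau -> tau <= 1/2 ->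
  Up c (INR m) nr - INR m * tau ^ 3 <= Wsum c m nr <= Up c (INR m) nr.
Proof.
  intros Hc Hn Ht Ht2.
  assert (Hti : forall i, (1 <= i <= m)%nat -> 0 <= (c + 2 * INR i) / nr <= tau).
  { intros i Hi. assert (INR i <= INR m) by (apply le_INR; lia).
    assert (0 <= INR i) by apply pos_INR. split.
    apply Rdiv_le_0_compat; lra.
    eapply Rle_trans; [|apply Ht]. apply Rmult_le_compat_r. apply Rlt_le, Rinv_0_lt_compat; lra. lra. }
  split.
  - rewrite <- (sum_tq c nr m) by lra. rewrite <- sumR_const.
    replace (sumR (fun i => - ((c + 2 * INR i) / nr) - ((c + 2 * INR i) / nr) ^ 2 / 2) m -
      sumR (fun _ => tau ^ 3) m) with
     (sumR (fun i => - ((c + 2 * INR i) / nr) - ((c + 2 * INR i) / nr) ^ 2 / 2 + - tau ^ 3) m).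
    2: { rewrite sumR_plus. replace (- tau ^ 3) with (-1 * tau ^ 3) by ring.
         rewrite (sumR_const (-1 * tau ^ 3)), (sumR_const (tau ^ 3)). ring. }
    unfold Wsum. apply sumR_le. intros i Hi. specialize (Hti i Hi).
    set (t := (c + 2 * INR i) / nr) in *.
    pose proof (ln1m_lower t ltac:(lra)).
    assert (t ^ 3 <= tau ^ 3) by (apply pow_incr; lra). lra.
  - rewrite <- (sum_tq c nr m) by lra. unfold Wsum. apply sumR_le. intros i Hi.
    specialize (Hti i Hi). apply ln1m_upper. lra.
Qed.

Definition F1 (q m r : R) := m * (q * (q + 1) / 2 - q + r * q) + q * m * (m + 1).
Definition F2 (q m r : R) :=
  m * (q * (q + 1) * (2 * q + 1) / 6 + (r - 1) * q * (q + 1) + q * (r - 1) ^ 2)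
  + 2 * m * (m + 1) * (q * (q + 1) / 2 + (r - 1) * q)
  + 2 * q * m * (m + 1) * (2 * m + 1) / 3.

Lemma sum_Up r m nr Q : nr <> 0 ->
  sumR (fun j => Up (INR j - 1 + r) m nr) Q = - F1 (INR Q) m r / nr - F2 (INR Q) m r / (2 * nr ^ 2).
Proof.
  intros Hn. induction Q.
  - simpl. unfold F1, F2. field. auto.
  - cbn [sumR]. rewrite IHQ. rewrite S_INR. unfold Up, F1, F2. field. auto.
Qed.

Lemma sum_half_up nr Q : nr <> 0 ->
  sumR (fun j => (1/2) * (- (INR j / nr) - (INR j / nr) ^ 2 / 2)) Q =
  - INR Q * (INR Q + 1) / (4 * nr) - INR Q * (INR Q + 1) * (2 * INR Q + 1) / (24 * nr ^ 2).
Proof.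
  intros Hn. induction Q.
  - simpl. field. auto.
  - cbn [sumR]. rewrite IHQ. rewrite S_INR. field. auto.
Qed.

Lemma sum_half_lo nr tau Q : nr <> 0 ->
  sumR (fun j => (1/2) * (- ((INR j + 1) / nr) - ((INR j + 1) / nr) ^ 2 / 2 - tau ^ 3)) Q =
  - INR Q * (INR Q + 3) / (4 * nr)
  - (INR Q * (INR Q + 1) * (2 * INR Q + 1) / 6 + INR Q * (INR Q + 1) + INR Q) / (4 * nr ^ 2)
  - INR Q * tau ^ 3 / 2.
Proof.
  intros Hn. induction Q.
  - simpl. field. auto.
  - cbn [sumR]. rewrite IHQ. rewrite S_INR. field. auto.
Qed.

Lemma nfloor_spec r : 0 <= r -> r - 1 < INR (Defs.nfloor r) <= r.
Proof.
  intros Hr. unfold Defs.nfloor. destruct (base_Int_part r) as [H1 H2].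
  assert (Hz : (0 <= Int_part r)%Z).
  { apply le_IZR. assert (IZR (Int_part r) > -1) by lra.
    destruct (Z_lt_le_dec (Int_part r) 0) as [Hl|Hl]; [|apply IZR_le; auto].
    assert (Int_part r <= -1)%Z by lia. apply IZR_le in H0. lra. }
  rewrite INR_IZR_INZ, Z2Nat.id by auto. lra.
Qed.

Lemma pn_spec x n : 0 < x -> x * sqrt (INR n) - 1 < INR (p_n x n) <= x * sqrt (INR n).
Proof.
  intros Hx. unfold p_n. apply nfloor_spec. apply Rmult_le_pos; [lra|apply sqrt_pos].
Qed.

Definition eseq (n : nat) := / sqrt (INR n).
Definition useq (x : R) (n : nat) := INR (p_n x n) / sqrt (INR n).

Lemma eseq_lim : is_lim_seq eseq 0.
Proof.
  apply is_lim_seq_spec. intros eps.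
  destruct (INR_archimed 1 (/ (eps * eps))) as [N HN]; [lra|].
  exists (S N). intros n Hn. unfold eseq.
  assert (He : 0 < eps) by apply cond_pos.
  assert (HnN : INR N < INR n) by (apply lt_INR; lia).
  assert (Hn0 : 0 < INR n). { assert (0 < / (eps * eps)) by (apply Rinv_0_lt_compat; nra). lra. }
  assert (Hs : 0 < sqrt (INR n)) by (apply sqrt_lt_R0; auto).
  rewrite Rminus_0_r, Rabs_pos_eq by (apply Rlt_le, Rinv_0_lt_compat; auto).
  assert (eps * eps * INR n > 1).
  { assert (INR n > / (eps * eps)) by lra.
    apply Rmult_lt_compat_l with (r := eps * eps) in H; [|nra].
    rewrite Rinv_r in H by nra. lra. }
  assert (Hsq : sqrt (INR n) * sqrt (INR n) = INR n) by (apply sqrt_sqrt; lra).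
  assert (1 < eps * sqrt (INR n)).
  { destruct (Rle_lt_dec (eps * sqrt (INR n)) 1) as [Hc|Hc]; auto.
    assert (eps * sqrt (INR n) * (eps * sqrt (INR n)) <= 1).
    { assert (0 <= eps * sqrt (INR n)) by nra. nra. }
    nra. }
  apply Rmult_lt_reg_r with (sqrt (INR n)); auto.
  rewrite Rinv_l by lra. lra.
Qed.

Lemma useq_lim x : 0 < x -> is_lim_seq (useq x) x.
Proof.
  intros Hx.
  apply (is_lim_seq_le_le_loc (fun n => x - eseq n) _ (fun _ => x)).
  - exists 1%nat. intros n Hn. unfold useq, eseq.
    assert (Hn0 : 0 < INR n) by (apply lt_0_INR; lia).
    assert (Hs : 0 < sqrt (INR n)) by (apply sqrt_lt_R0; auto).
    destruct (pn_spec x n Hx) as [H1 H2]. split.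
    + apply Rmult_le_reg_r with (sqrt (INR n)); auto. unfold Rdiv.
      rewrite Rmult_assoc, Rinv_l, Rmult_minus_distr_r, Rinv_l by lra. lra.
    + apply Rmult_le_reg_r with (sqrt (INR n)); auto. unfold Rdiv.
      rewrite Rmult_assoc, Rinv_l by lra. lra.
  - replace (Finite x) with (Rbar_minus x 0) by (simpl; f_equal; ring).
    apply is_lim_seq_minus'. apply is_lim_seq_const. apply eseq_lim.
  - apply is_lim_seq_const.
Qed.

Lemma lim_eq (u : nat -> R) (l l' : R) : is_lim_seq u l -> l = l' -> is_lim_seq u l'.
Proof. intros H E; subst; auto. Qed.

Ltac lim :=
  lazymatch goal with
  | |- is_lim_seq (fun n => @?a n + @?b n) _ => eapply (is_lim_seq_plus' a b); [lim | lim]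
  | |- is_lim_seq (fun n => @?a n * @?b n) _ => eapply (is_lim_seq_mult' a b); [lim | lim]
  | |- is_lim_seq (fun n => useq ?z n) _ => eassumption
  | |- is_lim_seq (fun n => eseq n) _ => eassumption
  | |- is_lim_seq (fun n => ?c) _ => apply is_lim_seq_const
  end.

Definition Aexp (x y p q nr : R) :=
  (p ^ 2 * q + p * q ^ 2) / (4 * nr) + x * y / 4
  + (2 * x ^ 3 * y + 2 * x * y ^ 3 + 3 * x ^ 2 * y ^ 2) / 24.
Definition tauE (p q nr : R) := (q + p + 1) / nr.
Definition UE x y p q nr := - F1 q (p / 2) 0 / nr - F2 q (p / 2) 0 / (2 * nr ^ 2) + Aexp x y p q nr.
Definition CE (p q nr : R) := q * (p / 2) * tauE p q nr ^ 3.
Definition UO x y p q nr := - F1 q ((p - 1) / 2) 1 / nr - F2 q ((p - 1) / 2) 1 / (2 * nr ^ 2)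
  - q * (q + 1) / (4 * nr) - q * (q + 1) * (2 * q + 1) / (24 * nr ^ 2) + Aexp x y p q nr.
Definition DO (p q nr : R) := - 2 * q / (4 * nr) - (q * (q + 1) + q) / (4 * nr ^ 2)
  - q * tauE p q nr ^ 3 / 2 - q * ((p - 1) / 2) * tauE p q nr ^ 3.

Definition PUE (x y u v e : R) := (1/4)*x*y + (1/12)*x*y*y*y + (1/8)*x*x*y*y + (1/12)*x*x*x*y + (-1/4)*u*v + (1/24)*u*v*e*e + (-1/8)*u*v*v*e + (-1/12)*u*v*v*v + (-1/8)*u*u*v*e + (-1/8)*u*u*v*v + (-1/12)*u*u*u*v.
Definition PCE (x y u v e : R) := (1/2)*u*v*e*e*e*e + (3/2)*u*v*v*e*e*e + (3/2)*u*v*v*v*e*e + (1/2)*u*v*v*v*v*e + (3/2)*u*u*v*e*e*e + (3)*u*u*v*v*e*e + (3/2)*u*u*v*v*v*e + (3/2)*u*u*u*v*e*e + (3/2)*u*u*u*v*v*e + (1/2)*u*u*u*u*v*e.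
Definition PUO (x y u v e : R) := (1/4)*x*y + (1/12)*x*y*y*y + (1/8)*x*x*y*y + (1/12)*x*x*x*y + (1/4)*v*e + (1/8)*v*e*e*e + (1/8)*v*v*e*e + (-1/4)*u*v + (1/24)*u*v*e*e + (-1/8)*u*v*v*e + (-1/12)*u*v*v*v + (-1/8)*u*u*v*e + (-1/8)*u*u*v*v + (-1/12)*u*u*u*v.
Definition PDO (x y u v e : R) := (-1/2)*v*e + (-1/2)*v*e*e*e + (-1/4)*v*v*e*e + (-1/2)*u*v*e*e*e*e + (-3/2)*u*v*v*e*e*e + (-3/2)*u*v*v*v*e*e + (-1/2)*u*v*v*v*v*e + (-3/2)*u*u*v*e*e*e + (-3)*u*u*v*v*e*e + (-3/2)*u*u*v*v*v*e + (-3/2)*u*u*u*v*e*e + (-3/2)*u*u*u*v*v*e + (-1/2)*u*u*u*u*v*e.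

Lemma sq_subst (F G : R -> R) nr : 0 < nr ->
  (forall r, 0 < r -> F (r * r) = G r) -> F nr = G (sqrt nr).
Proof.
  intros Hn H. rewrite <- (H (sqrt nr)) by (apply sqrt_lt_R0; auto).
  rewrite sqrt_sqrt; auto; lra.
Qed.

Lemma UE_id x y p q nr : 0 < nr ->
  UE x y p q nr = PUE x y (p / sqrt nr) (q / sqrt nr) (/ sqrt nr).
Proof.
  intros Hn. apply (sq_subst (fun nr => UE x y p q nr) (fun r => PUE x y (p / r) (q / r) (/ r))); auto.
  intros r Hr. unfold UE, PUE, Aexp, F1, F2. field. lra.
Qed.

Lemma CE_id x y p q nr : 0 < nr ->
  CE p q nr = PCE x y (p / sqrt nr) (q / sqrt nr) (/ sqrt nr).
Proof.
  intros Hn. apply (sq_subst (fun nr => CE p q nr) (fun r => PCE x y (p / r) (q / r) (/ r))); auto.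
  intros r Hr. unfold CE, PCE, tauE. field. lra.
Qed.

Lemma UO_id x y p q nr : 0 < nr ->
  UO x y p q nr = PUO x y (p / sqrt nr) (q / sqrt nr) (/ sqrt nr).
Proof.
  intros Hn. apply (sq_subst (fun nr => UO x y p q nr) (fun r => PUO x y (p / r) (q / r) (/ r))); auto.
  intros r Hr. unfold UO, PUO, Aexp, F1, F2. field. lra.
Qed.

Lemma DO_id x y p q nr : 0 < nr ->
  DO p q nr = PDO x y (p / sqrt nr) (q / sqrt nr) (/ sqrt nr).
Proof.
  intros Hn. apply (sq_subst (fun nr => DO p q nr) (fun r => PDO x y (p / r) (q / r) (/ r))); auto.
  intros r Hr. unfold DO, PDO, tauE. field. lra.
Qed.


Lemma lim_gen (x y : R) (F : R -> R -> R -> R) (G : R -> R -> R -> R -> R -> R) :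
  (forall p q nr, 0 < nr -> F p q nr = G x y (p / sqrt nr) (q / sqrt nr) (/ sqrt nr)) ->
  is_lim_seq (fun n => G x y (useq x n) (useq y n) (eseq n)) 0 ->
  is_lim_seq (fun n => F (INR (p_n x n)) (INR (p_n y n)) (INR n)) 0.
Proof.
  intros HF HG. apply (is_lim_seq_ext_loc (fun n => G x y (useq x n) (useq y n) (eseq n))); auto.
  exists 1%nat. intros n Hn. rewrite HF. reflexivity. apply lt_0_INR; lia.
Qed.

Lemma lim_UE x y (hx : 0 < x) (hy : 0 < y) : is_lim_seq (fun n => UE x y (INR (p_n x n)) (INR (p_n y n)) (INR n)) 0.
Proof.
  apply (lim_gen x y (UE x y) PUE). intros; apply UE_id; auto.
  pose proof (useq_lim x hx). pose proof (useq_lim y hy). pose proof eseq_lim.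
  unfold PUE. eapply lim_eq. lim. field.
Qed.

Lemma lim_CE x y (hx : 0 < x) (hy : 0 < y) : is_lim_seq (fun n => CE (INR (p_n x n)) (INR (p_n y n)) (INR n)) 0.
Proof.
  apply (lim_gen x y CE PCE). intros; apply CE_id; auto.
  pose proof (useq_lim x hx). pose proof (useq_lim y hy). pose proof eseq_lim.
  unfold PCE. eapply lim_eq. lim. field.
Qed.

Lemma lim_UO x y (hx : 0 < x) (hy : 0 < y) : is_lim_seq (fun n => UO x y (INR (p_n x n)) (INR (p_n y n)) (INR n)) 0.
Proof.
  apply (lim_gen x y (UO x y) PUO). intros; apply UO_id; auto.
  pose proof (useq_lim x hx). pose proof (useq_lim y hy). pose proof eseq_lim.
  unfold PUO. eapply lim_eq. lim. field.
Qed.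

Lemma lim_DO x y (hx : 0 < x) (hy : 0 < y) : is_lim_seq (fun n => DO (INR (p_n x n)) (INR (p_n y n)) (INR n)) 0.
Proof.
  apply (lim_gen x y DO PDO). intros; apply DO_id; auto.
  pose proof (useq_lim x hx). pose proof (useq_lim y hy). pose proof eseq_lim.
  unfold PDO. eapply lim_eq. lim. field.
Qed.

Definition Tj (P : nat) (nr : R) (j : nat) :=
  INR P / 2 * ln (2 / nr) +
  ln (Gamma ((nr - INR j + 1) / 2) / Gamma ((nr - INR P - INR j + 1) / 2)).

Lemma even_case (P Q m : nat) (nr : R) : P = (2 * m)%nat -> 0 < nr ->
  (INR Q + INR P + 1) / nr <= 1 / 2 ->
  - F1 (INR Q) (INR P / 2) 0 / nr - F2 (INR Q) (INR P / 2) 0 / (2 * nr ^ 2)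
    - INR Q * (INR P / 2) * tauE (INR P) (INR Q) nr ^ 3
  <= sumR (Tj P nr) Q <=
  - F1 (INR Q) (INR P / 2) 0 / nr - F2 (INR Q) (INR P / 2) 0 / (2 * nr ^ 2).
Proof.
  intros HP Hn Ht.
  assert (Hpm : INR P / 2 = INR m) by (subst; rewrite mult_INR; simpl; field).
  rewrite Hpm. rewrite <- (sum_Up 0 (INR m) nr Q) by lra.
  set (tau := tauE (INR P) (INR Q) nr).
  assert (HQ : (Q <= Q)%nat) by lia.
  assert (Hsum : sumR (Tj P nr) Q = sumR (fun j => Wsum (INR j - 1) m nr) Q).
  { apply sumR_ext. intros j Hj. unfold Tj. rewrite Hpm.
    assert (HjQ : INR j <= INR Q) by (apply le_INR; lia).
    assert (Hj1 : 1 <= INR j) by (apply (le_INR 1); lia).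
    assert (INR Q + INR P + 1 <= nr / 2).
    { apply Rmult_le_compat_r with (r := nr) in Ht; [|lra].
      unfold Rdiv in Ht. rewrite Rmult_assoc, Rinv_l in Ht by lra. lra. }
    rewrite <- W_gamma; auto.
    - replace ((nr - (INR j - 1)) / 2) with ((nr - INR j + 1) / 2) by field.
      replace ((nr - INR j + 1) / 2 - INR m) with ((nr - INR P - INR j + 1) / 2)
        by (rewrite <- Hpm; field). reflexivity.
    - rewrite <- Hpm. lra. }
  rewrite Hsum.
  assert (HI : forall j, (1 <= j <= Q)%nat ->
     Up (INR j - 1) (INR m) nr - INR m * tau ^ 3 <= Wsum (INR j - 1) m nr <= Up (INR j - 1) (INR m) nr).
  { intros j Hj.
    assert (HjQ : INR j <= INR Q) by (apply le_INR; lia).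
    assert (Hj1 : 1 <= INR j) by (apply (le_INR 1); lia).
    apply W_bounds; try lra.
    unfold tau, tauE. apply Rmult_le_compat_r. apply Rlt_le, Rinv_0_lt_compat; lra.
    rewrite <- Hpm. lra. unfold tau, tauE; lra. }
  assert (E1 : sumR (fun j => Up (INR j - 1 + 0) (INR m) nr) Q = sumR (fun j => Up (INR j - 1) (INR m) nr) Q)
    by (apply sumR_ext; intros; rewrite Rplus_0_r; auto).
  rewrite E1.
  assert (E2 : sumR (fun j => Up (INR j - 1) (INR m) nr - INR m * tau ^ 3) Q =
     sumR (fun j => Up (INR j - 1) (INR m) nr) Q - INR Q * INR m * tau ^ 3).
  { rewrite (sumR_ext _ (fun j => Up (INR j - 1) (INR m) nr + (- (INR m * tau ^ 3)))) by (intros; ring).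
    rewrite sumR_plus, sumR_const. ring. }
  split.
  - rewrite <- E2. apply sumR_le. intros j Hj. apply HI; auto.
  - apply sumR_le. intros j Hj. apply HI; auto.
Qed.

Lemma H_bounds (nr : R) (j : nat) : 0 < nr -> (INR j + 1) / nr <= 1/2 ->
  let a := (nr - INR j + 1) / 2 in
  (1/2) * (- ((INR j + 1) / nr) - ((INR j + 1) / nr) ^ 2 / 2 - ((INR j + 1) / nr) ^ 3)
  <= (1/2) * ln (2 / nr) + ln (Gamma a / Gamma (a - 1/2)) <=
  (1/2) * (- (INR j / nr) - (INR j / nr) ^ 2 / 2).
Proof.
  intros Hn Hj a.
  assert (Hj0 : 0 <= INR j) by apply pos_INR.
  assert (Hjn : INR j + 1 <= nr / 2).
  { apply Rmult_le_compat_r with (r := nr) in Hj; [|lra].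
    unfold Rdiv in Hj. rewrite Rmult_assoc, Rinv_l in Hj by lra. lra. }
  assert (Ha : 1 < a) by (unfold a; lra).
  assert (HG : 0 < Gamma a) by (apply Gamma_pos; lra).
  assert (HG' : 0 < Gamma (a - 1/2)) by (apply Gamma_pos; lra).
  destruct (Gamma_half a Ha) as [H1 H2].
  apply ln_le in H1; [|apply Rmult_lt_0_compat; [lra|apply pow_lt; lra]].
  apply ln_le in H2; [|apply pow_lt; lra].
  rewrite ln_mult in H1, H2 by (try lra; apply pow_lt; lra).
  rewrite !ln_pow in H1, H2 by lra. simpl INR in H1, H2.
  rewrite (ln_div (Gamma a) (Gamma (a - 1/2))) by lra.
  assert (E1 : ln (2 / nr) + ln (a - 1) = ln (1 - (INR j + 1) / nr)).
  { rewrite <- ln_mult by (try apply Rdiv_lt_0_compat; lra). f_equal. unfold a. field. lra. }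
  assert (E2 : ln (2 / nr) + ln (a - 1/2) = ln (1 - INR j / nr)).
  { rewrite <- ln_mult by (try apply Rdiv_lt_0_compat; lra). f_equal. unfold a. field. lra. }
  assert (T1 : 0 <= (INR j + 1) / nr <= 1/2) by (split; [apply Rdiv_le_0_compat|]; lra).
  assert (T2 : 0 <= INR j / nr < 1).
  { split. apply Rdiv_le_0_compat; lra.
    assert (INR j / nr <= (INR j + 1) / nr).
    { apply Rmult_le_compat_r. apply Rlt_le, Rinv_0_lt_compat; lra. lra. }
    lra. }
  pose proof (ln1m_lower _ T1). pose proof (ln1m_upper _ T2).
  lra.
Qed.

Lemma odd_case (P Q m : nat) (nr : R) : P = (2 * m + 1)%nat -> 0 < nr ->
  (INR Q + INR P + 1) / nr <= 1 / 2 ->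
  let tau := tauE (INR P) (INR Q) nr in
  let q := INR Q in
  - F1 q (INR m) 1 / nr - F2 q (INR m) 1 / (2 * nr ^ 2) - q * INR m * tau ^ 3
  + (- q * (q + 3) / (4 * nr) - (q * (q + 1) * (2 * q + 1) / 6 + q * (q + 1) + q) / (4 * nr ^ 2)
     - q * tau ^ 3 / 2)
  <= sumR (Tj P nr) Q <=
  - F1 q (INR m) 1 / nr - F2 q (INR m) 1 / (2 * nr ^ 2)
  + (- q * (q + 1) / (4 * nr) - q * (q + 1) * (2 * q + 1) / (24 * nr ^ 2)).
Proof.
  intros HP Hn Ht tau q. subst q.
  pose proof (pos_INR P). pose proof (pos_INR m). pose proof (pos_INR Q).
  assert (Hpm : INR P = 2 * INR m + 1) by (subst; rewrite plus_INR, mult_INR; simpl; ring).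
  assert (HB : INR Q + INR P + 1 <= nr / 2).
  { apply Rmult_le_compat_r with (r := nr) in Ht; [|lra].
    unfold Rdiv in Ht. rewrite Rmult_assoc, Rinv_l in Ht by lra. lra. }
  set (Hh := fun j : nat => (1/2) * ln (2 / nr) +
      ln (Gamma ((nr - INR j + 1) / 2) / Gamma ((nr - INR j + 1) / 2 - 1/2))).
  assert (Hsum : sumR (Tj P nr) Q = sumR (fun j => Wsum (INR j) m nr + Hh j) Q).
  { apply sumR_ext. intros j Hj. unfold Tj, Hh.
    assert (HjQ : INR j <= INR Q) by (apply le_INR; lia).
    assert (Hj1 : 1 <= INR j) by (apply (le_INR 1); lia).
    rewrite <- W_gamma; try lra.
    set (a := (nr - INR j + 1) / 2).
    replace ((nr - INR j) / 2) with (a - 1/2) by (unfold a; field).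
    replace ((nr - INR P - INR j + 1) / 2) with (a - 1/2 - INR m) by (unfold a; rewrite Hpm; field).
    assert (0 < Gamma a) by (apply Gamma_pos; unfold a; lra).
    assert (0 < Gamma (a - 1/2)) by (apply Gamma_pos; unfold a; lra).
    assert (0 < Gamma (a - 1/2 - INR m)) by (apply Gamma_pos; unfold a; lra).
    rewrite !ln_div by lra. rewrite Hpm. field. }
  rewrite Hsum, sumR_plus.
  rewrite <- (sum_Up 1 (INR m) nr Q) by lra.
  rewrite <- sum_half_up by lra.
  rewrite <- (sum_half_lo nr tau Q) by lra.
  assert (E1 : sumR (fun j => Up (INR j - 1 + 1) (INR m) nr) Q = sumR (fun j => Up (INR j) (INR m) nr) Q)
    by (apply sumR_ext; intros; f_equal; ring).
  rewrite E1.
  assert (E2 : sumR (fun j => Up (INR j) (INR m) nr - INR m * tau ^ 3) Q =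
     sumR (fun j => Up (INR j) (INR m) nr) Q - INR Q * INR m * tau ^ 3).
  { rewrite (sumR_ext _ (fun j => Up (INR j) (INR m) nr + (- (INR m * tau ^ 3)))) by (intros; ring).
    rewrite sumR_plus, sumR_const. ring. }
  rewrite <- E2.
  assert (HW : forall j, (1 <= j <= Q)%nat ->
     Up (INR j) (INR m) nr - INR m * tau ^ 3 <= Wsum (INR j) m nr <= Up (INR j) (INR m) nr).
  { intros j Hj.
    assert (HjQ : INR j <= INR Q) by (apply le_INR; lia).
    assert (Hj1 : 1 <= INR j) by (apply (le_INR 1); lia).
    apply W_bounds; try lra.
    unfold tau, tauE. apply Rmult_le_compat_r. apply Rlt_le, Rinv_0_lt_compat; lra. lra.
    unfold tau, tauE; lra. }
  assert (HH : forall j, (1 <= j <= Q)%nat ->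
     (1/2) * (- ((INR j + 1) / nr) - ((INR j + 1) / nr) ^ 2 / 2 - tau ^ 3) <= Hh j
     <= (1/2) * (- (INR j / nr) - (INR j / nr) ^ 2 / 2)).
  { intros j Hj.
    assert (HjQ : INR j <= INR Q) by (apply le_INR; lia).
    assert (Hj1 : 1 <= INR j) by (apply (le_INR 1); lia).
    assert (Hjt : (INR j + 1) / nr <= tau).
    { unfold tau, tauE. apply Rmult_le_compat_r. apply Rlt_le, Rinv_0_lt_compat; lra. lra. }
    assert (Hj0 : 0 <= (INR j + 1) / nr) by (apply Rdiv_le_0_compat; lra).
    destruct (H_bounds nr j Hn ltac:(unfold tau, tauE in *; lra)) as [L U].
    unfold Hh. split; auto.
    assert (((INR j + 1) / nr) ^ 3 <= tau ^ 3) by (apply pow_incr; lra). lra. }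
  split.
  - rewrite <- sumR_plus. rewrite <- sumR_plus. apply sumR_le. intros j Hj.
    destruct (HW j Hj). destruct (HH j Hj). lra.
  - rewrite <- sumR_plus. rewrite <- sumR_plus. apply sumR_le. intros j Hj.
    destruct (HW j Hj). destruct (HH j Hj). lra.
Qed.

Lemma eventually_good x y : 0 < x -> 0 < y -> exists N, forall n, (N <= n)%nat ->
  0 < INR n /\ (INR (p_n y n) + INR (p_n x n) + 1) / INR n <= 1 / 2.
Proof.
  intros hx hy.
  destruct (INR_archimed 1 ((2 * (x + y) + 2) ^ 2)) as [N HN]; [lra|].
  exists N. intros n Hn.
  assert (HnN : INR N <= INR n) by (apply le_INR; lia).
  set (s := sqrt (INR n)).
  assert (Hn0 : 0 < INR n) by nra.
  assert (Hs2 : s * s = INR n) by (apply sqrt_sqrt; lra).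
  assert (Hs0 : 0 <= s) by apply sqrt_pos.
  assert (Hs : 2 * (x + y) + 2 < s).
  { destruct (Rle_lt_dec s (2 * (x + y) + 2)) as [H|H]; auto.
    assert (s * s <= (2 * (x + y) + 2) ^ 2) by nra. lra. }
  destruct (pn_spec x n hx) as [_ Hp]. destruct (pn_spec y n hy) as [_ Hq].
  fold s in Hp, Hq. split; auto.
  apply Rmult_le_reg_r with (INR n); auto. unfold Rdiv. rewrite Rmult_assoc, Rinv_l by lra.
  nra.
Qed.

Lemma lnK_eq x y n : 0 < INR n ->
  (INR (p_n y n) + INR (p_n x n) + 1) / INR n <= 1 / 2 ->
  0 < K_n x y n /\ ln (K_n x y n) = sumR (Tj (p_n x n) (INR n)) (p_n y n).
Proof.
  intros Hn Ht. set (P := p_n x n) in *. set (Q := p_n y n) in *.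
  assert (HB : INR Q + INR P + 1 <= INR n / 2).
  { apply Rmult_le_compat_r with (r := INR n) in Ht; [|lra].
    unfold Rdiv in Ht. rewrite Rmult_assoc, Rinv_l in Ht by lra. lra. }
  assert (Hpos : forall j, (1 <= j <= Q)%nat ->
     0 < Gamma ((INR n - INR j + 1) / 2) / Gamma ((INR n - INR P - INR j + 1) / 2)).
  { intros j Hj. assert (INR j <= INR Q) by (apply le_INR; lia).
    pose proof (pos_INR P).
    apply Rdiv_lt_0_compat; apply Gamma_pos; lra. }
  unfold K_n. fold P Q.
  assert (H1 : 0 < prodR (fun j => Gamma ((INR n - INR j + 1) / 2) /
                  Gamma ((INR n - INR P - INR j + 1) / 2)) Q) by (apply prodR_pos; auto).
  split.
  - apply Rmult_lt_0_compat; auto. apply Rpower_pos'.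
  - rewrite ln_mult; auto; [|apply Rpower_pos'].
    rewrite ln_Rpower, ln_prodR by auto. unfold Tj.
    rewrite sumR_plus, sumR_const, mult_INR. field.
Qed.

Theorem lemma2p6 (x y : R) (hx : 0 < x) (hy : 0 < y) :
  exists o : nat -> R,
    is_lim_seq o 0 /\
    exists N : nat, forall n : nat, (N <= n)%nat ->
      let p := INR (p_n x n) in
      let q := INR (p_n y n) in
      K_n x y n =
      exp (- ((p ^ 2 * q + p * q ^ 2) / (4 * INR n) + x * y / 4
              + (2 * x ^ 3 * y + 2 * x * y ^ 3 + 3 * x ^ 2 * y ^ 2) / 24)
           + o n).
Proof.
  set (pp := fun n => INR (p_n x n)). set (qq := fun n => INR (p_n y n)).
  exists (fun n => ln (K_n x y n) + Aexp x y (pp n) (qq n) (INR n)).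
  destruct (eventually_good x y hx hy) as [N HN].
  split.
  - set (W := fun n => Rabs (UE x y (pp n) (qq n) (INR n)) + Rabs (CE (pp n) (qq n) (INR n))
         + Rabs (UO x y (pp n) (qq n) (INR n)) + Rabs (DO (pp n) (qq n) (INR n))).
    assert (HW : is_lim_seq W 0).
    { unfold W. eapply lim_eq.
      apply is_lim_seq_plus'. apply is_lim_seq_plus'. apply is_lim_seq_plus'.
      apply (is_lim_seq_abs _ 0 (lim_UE x y hx hy)).
      apply (is_lim_seq_abs _ 0 (lim_CE x y hx hy)).
      apply (is_lim_seq_abs _ 0 (lim_UO x y hx hy)).
      apply (is_lim_seq_abs _ 0 (lim_DO x y hx hy)).
      simpl. rewrite Rabs_R0. ring. }
    apply (is_lim_seq_le_le_loc (fun n => - W n) _ W).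
    + exists N. intros n Hn. destruct (HN n Hn) as [Hn0 Ht].
      destruct (lnK_eq x y n Hn0 Ht) as [HK HL]. rewrite HL.
      unfold W. fold (pp n) (qq n).
      pose proof (Rabs_pos (UE x y (pp n) (qq n) (INR n))).
      pose proof (Rabs_pos (CE (pp n) (qq n) (INR n))).
      pose proof (Rabs_pos (UO x y (pp n) (qq n) (INR n))).
      pose proof (Rabs_pos (DO (pp n) (qq n) (INR n))).
      destruct (Nat.Even_or_Odd (p_n x n)) as [[m Hm]|[m Hm]].
      * destruct (even_case (p_n x n) (p_n y n) m (INR n) Hm Hn0 Ht) as [L U].
        fold (pp n) (qq n) in L, U.
        assert (E1 : UE x y (pp n) (qq n) (INR n) =
          - F1 (qq n) (pp n / 2) 0 / INR n - F2 (qq n) (pp n / 2) 0 / (2 * INR n ^ 2)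
          + Aexp x y (pp n) (qq n) (INR n)) by reflexivity.
        assert (E2 : CE (pp n) (qq n) (INR n) = qq n * (pp n / 2) * tauE (pp n) (qq n) (INR n) ^ 3)
          by reflexivity.
        pose proof (Rle_abs (UE x y (pp n) (qq n) (INR n))).
        pose proof (Rle_abs (- UE x y (pp n) (qq n) (INR n))). rewrite Rabs_Ropp in H4.
        pose proof (Rle_abs (CE (pp n) (qq n) (INR n))).
        pose proof (Rle_abs (- CE (pp n) (qq n) (INR n))). rewrite Rabs_Ropp in H6.
        split; lra.
      * destruct (odd_case (p_n x n) (p_n y n) m (INR n) Hm Hn0 Ht) as [L U].
        fold (pp n) (qq n) in L, U.
        assert (Hmi : INR m = (pp n - 1) / 2).
        { unfold pp. rewrite Hm, plus_INR, mult_INR. simpl. field. }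
        rewrite Hmi in L, U.
        assert (E1 : UO x y (pp n) (qq n) (INR n) =
          - F1 (qq n) ((pp n - 1) / 2) 1 / INR n - F2 (qq n) ((pp n - 1) / 2) 1 / (2 * INR n ^ 2)
          + (- qq n * (qq n + 1) / (4 * INR n) - qq n * (qq n + 1) * (2 * qq n + 1) / (24 * INR n ^ 2))
          + Aexp x y (pp n) (qq n) (INR n)).
        { unfold UO. field. lra. }
        assert (E2 : DO (pp n) (qq n) (INR n) =
          - qq n * ((pp n - 1) / 2) * tauE (pp n) (qq n) (INR n) ^ 3
          + (- qq n * (qq n + 3) / (4 * INR n)
             - (qq n * (qq n + 1) * (2 * qq n + 1) / 6 + qq n * (qq n + 1) + qq n) / (4 * INR n ^ 2)
             - qq n * tauE (pp n) (qq n) (INR n) ^ 3 / 2)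
          - (- qq n * (qq n + 1) / (4 * INR n) - qq n * (qq n + 1) * (2 * qq n + 1) / (24 * INR n ^ 2))).
        { unfold DO. field. lra. }
        pose proof (Rle_abs (UO x y (pp n) (qq n) (INR n))).
        pose proof (Rle_abs (- UO x y (pp n) (qq n) (INR n))). rewrite Rabs_Ropp in H4.
        pose proof (Rle_abs (DO (pp n) (qq n) (INR n))).
        pose proof (Rle_abs (- DO (pp n) (qq n) (INR n))). rewrite Rabs_Ropp in H6.
        split; lra.
    + pose proof (proj1 (is_lim_seq_opp W 0) HW) as Ho. simpl in Ho.
      replace (- 0) with 0 in Ho by ring. exact Ho.
    + auto.
  - exists N. intros n Hn. cbv zeta.
    destruct (HN n Hn) as [Hn0 Ht].
    destruct (lnK_eq x y n Hn0 Ht) as [HK HL].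
    unfold Aexp, pp, qq.
    match goal with |- _ = exp ?e => replace e with (ln (K_n x y n)) by ring end.
    rewrite exp_ln; auto.
Qed.
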